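(* Let $0<\gamma<\frac12$, $0\le\delta\le1$, and let $m\ge2$ be an integer. Then $$F(1,\gamma,\delta)+F(m+1,\gamma)<F(2,\gamma)+F(m,\gamma).$$
   Context: Logarithms base 2; $h$ is binary entropy; $\|u\|$ is Hamming weight. For real $m\ge2$ and $\gamma\in(0,\frac12)$, $F(m,\gamma)=\min_{x\in(0,1)}\big[\log((1+x)^m+(1-x)^m)-m\gamma\log x-1\big]$. For an integer $m\ge1$, $\gamma\in(0,\frac12)$, $\delta\in[0,1]$, let $H^*(m,\gamma,\delta)$ be the maximum entropy of a probability distribution $Q$ on $\mathbb{F}_2^m$ with $\Pr_{u\sim Q}(u_i=1)=\gamma$ for all $i$ and $\Pr_{u\sim Q}(\|u\|\text{ odd})=\delta$; $F(m,\gamma,\delta)=H^*(m,\gamma,\delta)-h(\delta)$ if such $Q$ exists, and $-\infty$ otherwise. *)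

(* Defs.v *)
From Stdlib Require Import Reals Lra Lia Arith Bool ClassicalEpsilon.
Open Scope R_scope.

Definition log2 (x : R) : R := ln x / ln 2.

(* x log2 x with the convention 0 log 0 = 0 *)
Definition plogp (x : R) : R := if Rle_dec x 0 then 0 else x * log2 x.

Definition hbin (d : R) : R := - plogp d - plogp (1 - d).

Fixpoint sumN (n : nat) (f : nat -> R) : R :=
  match n with
  | O => 0
  | S n' => sumN n' f + f n'
  end.

(* Elements of F_2^m are encoded as naturals k < 2^m; coordinate i
   (0 <= i < m) of k is the i-th binary digit of k. *)
Definition bit (k i : nat) : bool := Nat.testbit k i.

Fixpoint hweight (m k : nat) : nat :=
  match m with
  | O => O
  | S m' => hweight m' k + (if bit k m' then 1 else 0)
  end.

(* A probability distribution Q on F_2^m (values outside [0,2^m) ignored) *)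
Definition is_distr (m : nat) (Q : nat -> R) : Prop :=
  (forall k, (k < 2 ^ m)%nat -> 0 <= Q k) /\ sumN (2 ^ m) Q = 1.

Definition entropy (m : nat) (Q : nat -> R) : R :=
  - sumN (2 ^ m) (fun k => plogp (Q k)).

Definition feasible (m : nat) (g d : R) (Q : nat -> R) : Prop :=
  is_distr m Q /\
  (forall i, (i < m)%nat ->
     sumN (2 ^ m) (fun k => if bit k i then Q k else 0) = g) /\
  sumN (2 ^ m) (fun k => if Nat.odd (hweight m k) then Q k else 0) = d.

Definition is_max_entropy (m : nat) (g d H : R) : Prop :=
  (exists Q, feasible m g d Q /\ entropy m Q = H) /\
  (forall Q, feasible m g d Q -> entropy m Q <= H).

(* F(m,gamma,delta) as an extended real: None stands for -infinity. *)
Definition F3 (m : nat) (g d : R) : option R :=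
  epsilon (inhabits None)
    (fun o => match o with
              | None => ~ (exists Q, feasible m g d Q)
              | Some v => exists H, is_max_entropy m g d H /\ v = H - hbin d
              end).

Definition Fobj (m g x : R) : R :=
  log2 (Rpower (1 + x) m + Rpower (1 - x) m) - m * g * log2 x - 1.

Definition F2 (m g : R) : R :=
  epsilon (inhabits 0)
    (fun v => (exists x, 0 < x < 1 /\ Fobj m g x = v) /\
              (forall x, 0 < x < 1 -> v <= Fobj m g x)).

(* Main.v *)
Require Import Defs.
From Stdlib Require Import Reals Lra Lia Classical ClassicalEpsilon.
Open Scope R_scope.


Lemma exp_convex a b p q : 0 <= a -> 0 <= b -> a + b = 1 ->
  exp (a*p + b*q) <= a * exp p + b * exp q.
Proof.
  intros Ha Hb Hab. set (c := a*p+b*q).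
  assert (E1: exp p = exp c * exp (p - c)) by (rewrite <- exp_plus; f_equal; ring).
  assert (E2: exp q = exp c * exp (q - c)) by (rewrite <- exp_plus; f_equal; ring).
  pose proof (exp_ineq1_le (p - c)). pose proof (exp_ineq1_le (q - c)).
  pose proof (exp_pos c).
  rewrite E1, E2.
  assert (a * (exp c * exp (p - c)) >= a * (exp c * (1 + (p-c)))) by (apply Rle_ge, Rmult_le_compat_l; nra).
  assert (b * (exp c * exp (q - c)) >= b * (exp c * (1 + (q-c)))) by (apply Rle_ge, Rmult_le_compat_l; nra).
  assert (a * (exp c * (1 + (p-c))) + b * (exp c * (1 + (q-c))) = exp c).
  { unfold c in *. replace b with (1 - a) by lra. ring. }
  lra.
Qed.

Lemma pow_exp k a : exp a ^ k = exp (INR k * a).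
Proof.
  induction k; simpl.
  - replace (0*a) with 0 by ring. now rewrite exp_0.
  - rewrite IHk, <- exp_plus. f_equal. destruct k; simpl; ring.
Qed.

Lemma pow_exp_ln k x : 0 < x -> x ^ k = exp (INR k * ln x).
Proof. intros Hx. rewrite <- pow_exp, exp_ln; auto. Qed.

Lemma C_pos n k : 0 < C n k.
Proof.
  unfold C. apply Rdiv_lt_0_compat. apply INR_fact_lt_0.
  apply Rmult_lt_0_compat; apply INR_fact_lt_0.
Qed.

Lemma C_rel n j : (j < n)%nat -> C n (S j) * INR (S j) = C n j * (INR n - INR j).
Proof.
  intros H. unfold C.
  replace (n - j)%nat with (S (n - S j)) by lia.
  rewrite <- minus_INR by lia.
  replace (INR (n - j)) with (INR (S (n - S j))) by (f_equal; lia).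
  rewrite !fact_simpl, !mult_INR.
  pose proof (INR_fact_lt_0 j). pose proof (INR_fact_lt_0 (n - S j)).
  pose proof (lt_0_INR (S j) ltac:(lia)). pose proof (lt_0_INR (S (n - S j)) ltac:(lia)).
  field. repeat split; lra.
Qed.

Lemma C_n0 n : C n 0 = 1.
Proof. unfold C. rewrite Nat.sub_0_r. simpl. pose proof (INR_fact_lt_0 n). field. lra. Qed.
Lemma C_nn n : C n n = 1.
Proof. unfold C. rewrite Nat.sub_diag. simpl. pose proof (INR_fact_lt_0 n). field. lra. Qed.

(* termwise AM-GM *)
Lemma term_ineq n j X L : (j < n)%nat ->
  C (S n) (S j) * exp (INR (S j) * ((INR n * X + L) / (INR n + 1)))
  <= C n (S j) * exp (INR (S j) * X) + exp L * (C n j * exp (INR j * X)).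
Proof.
  intros H.
  pose proof (pascal n j H) as Hp.
  pose proof (C_rel n j H) as Hr.
  pose proof (C_pos n j). pose proof (C_pos n (S j)).
  set (al := C n (S j)) in *. set (be := C n j) in *.
  assert (Hn: INR j + 1 <= INR n) by (rewrite <- S_INR; apply le_INR; lia).
  rewrite S_INR in *.
  set (b := (INR j + 1) / (INR n + 1)).
  pose proof (pos_INR j).
  assert (Hb0: 0 <= b) by (unfold b; apply Rmult_le_pos; [lra| apply Rlt_le, Rinv_0_lt_compat; lra]).
  assert (Hb1: b <= 1) by (unfold b; apply Rmult_le_reg_r with (INR n + 1); [lra|]; unfold Rdiv; rewrite Rmult_assoc, Rinv_l; lra).
  assert (Hbe: be = (al + be) * b).
  { apply Rmult_eq_reg_r with (INR n + 1); [|lra].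
    replace ((al + be) * b * (INR n + 1)) with ((al + be) * (INR j + 1)) by (unfold b; field; lra).
    nra. }
  assert (Hal: al = (al+be) * (1-b)) by lra.
  rewrite <- Hp. fold be al.
  replace (exp L * (be * exp (INR j * X))) with (be * exp (INR j * X + L))
    by (rewrite exp_plus; ring).
  replace ((INR j + 1) * ((INR n * X + L) / (INR n + 1))) with
      ((1-b) * ((INR j+1) * X) + b * (INR j * X + L))
    by (unfold b; field; lra).
  assert (0 < al + be) by lra.
  pose proof (exp_convex (1-b) b ((INR j+1)*X) (INR j * X + L) ltac:(lra) Hb0 ltac:(lra)).
  set (e1 := exp ((INR j + 1) * X)) in *. set (e2 := exp (INR j * X + L)) in *.
  assert (K1: al * e1 = (al+be)*(1-b)*e1) by (rewrite <- Hal; ring).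
  assert (K2: be * e2 = (al+be)*b*e2) by (rewrite <- Hbe; ring).
  rewrite K1, K2.
  replace (be + al) with (al + be) by ring.
  replace ((al + be) * (1 - b) * e1 + (al + be) * b * e2) with ((al+be) * ((1-b)*e1 + b*e2)) by ring.
  apply Rmult_le_compat_l; lra.
Qed.


Lemma bin_p k y : (1+y)^k = sum_f_R0 (fun i => C k i * y^i) k.
Proof.
  replace (1+y) with (y+1) by ring. rewrite binomial.
  apply sum_eq. intros i _. rewrite pow1. ring.
Qed.

Lemma bin_m k y : (1-y)^k = sum_f_R0 (fun i => C k i * y^i * (-1)^i) k.
Proof.
  replace (1-y) with ((-1)*y+1) by ring. rewrite binomial.
  apply sum_eq. intros i _. rewrite pow1, Rpow_mult_distr. ring.
Qed.

Lemma m1_sq i : (-1)^(S i) = - (-1)^i.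
Proof. simpl. ring. Qed.

Lemma m1_bound i : 0 <= 1 + (-1)^i /\ 0 <= 1 - (-1)^i.
Proof.
  pose proof (pow_1_abs i). destruct (Rcase_abs ((-1)^i)).
  - rewrite Rabs_left in H by auto. lra.
  - rewrite Rabs_right in H by auto. lra.
Qed.

Definition Wf n x i := if (i <=? n)%nat then C n i * x^i else 0.
Definition Wm n x i := match i with O => 0 | S j => Wf n x j end.

Lemma binom_ineq n x l : 0<x -> 0<l ->
  let z := exp ((INR n * ln x + ln l) / (INR n + 1)) in
  (1+z)^(S n) + (1-z)^(S n) <= (1+x)^n*(1+l) + (1-x)^n*(1-l).
Proof.
  intros Hx Hl z.
  rewrite bin_p, bin_m, <- plus_sum.
  rewrite bin_p, bin_m. rewrite (Rmult_comm _ (1+l)), (Rmult_comm _ (1-l)), !scal_sum, <- plus_sum.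
  apply Rle_trans with (sum_f_R0 (fun i => (1 + (-1)^i) * (Wf n x i + l * Wm n x i)) (S n)).
  - apply sum_Rle. intros i Hi.
    replace (C (S n) i * z ^ i + C (S n) i * z ^ i * (-1) ^ i) with
       ((1 + (-1)^i) * (C (S n) i * z^i)) by ring.
    apply Rmult_le_compat_l. apply m1_bound.
    destruct i as [|j].
    + rewrite C_n0. unfold Wm, Wf. simpl. rewrite C_n0. lra.
    + destruct (Nat.eq_dec j n) as [->|Hj].
      * unfold Wm, Wf. rewrite Nat.leb_refl.
        replace ((S n <=? n)%nat) with false by (symmetry; apply Nat.leb_gt; lia).
        rewrite !C_nn. unfold z. rewrite pow_exp.
        replace (INR (S n) * ((INR n * ln x + ln l) / (INR n + 1))) with (INR n * ln x + ln l)
          by (rewrite S_INR; field; pose proof (pos_INR n); lra).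
        rewrite exp_plus, exp_ln by auto. rewrite <- pow_exp, exp_ln by auto. lra.
      * assert (Hjn: (j < n)%nat) by lia.
        unfold Wm, Wf.
        replace ((S j <=? n)%nat) with true by (symmetry; apply Nat.leb_le; lia).
        replace ((j <=? n)%nat) with true by (symmetry; apply Nat.leb_le; lia).
        unfold z. rewrite pow_exp, !(pow_exp_ln _ x Hx).
        rewrite <- (exp_ln l) at 2 by auto.
        apply term_ineq; auto.
  - replace (sum_f_R0 (fun i : nat => (1 + (-1) ^ i) * (Wf n x i + l * Wm n x i)) (S n))
      with (sum_f_R0 (fun i => (1 + (-1)^i) * Wf n x i) (S n) + l * sum_f_R0 (fun i => (1 + (-1)^i) * Wm n x i) (S n))
      by (rewrite scal_sum, <- plus_sum; apply sum_eq; intros; ring).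
    rewrite tech5. unfold Wf at 2.
    replace ((S n <=? n)%nat) with false by (symmetry; apply Nat.leb_gt; lia).
    rewrite (decomp_sum _ (S n)) by lia. simpl pred. unfold Wm at 1.
    match goal with |- ?A + _ + l * (_ + ?B) <= _ => replace (A + _ + l * (_ + B)) with (A + l * B) by ring end.
    rewrite !scal_sum, <- !plus_sum.
    apply Req_le.
    apply sum_eq. intros i Hi. unfold Wm, Wf.
    replace ((i <=? n)%nat) with true by (symmetry; apply Nat.leb_le; lia).
    rewrite m1_sq. ring.
Qed.


Lemma ln_le' a b : 0 < a -> a <= b -> ln a <= ln b.
Proof.
  intros Ha Hab. destruct (Rle_lt_or_eq_dec a b Hab).
  - apply Rlt_le, ln_increasing; auto.
  - subst; lra.
Qed.

Lemma ln_le_sub1 u : 0 < u -> ln u <= u - 1.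
Proof. intros Hu. pose proof (exp_ineq1_le (ln u)). rewrite exp_ln in H; lra. Qed.

Lemma ln_cont y : 0 < y -> continuity_pt ln y.
Proof.
  intros Hy. apply derivable_continuous_pt. exists (/ y). apply derivable_pt_lim_ln; auto.
Qed.

Lemma ln2_pos : 0 < ln 2.
Proof. pose proof ln_lt_2. lra. Qed.

Definition fp (n:nat) g x := ln ((1+x)^n+(1-x)^n) / ln 2 - INR n * g * (ln x / ln 2) - 1.

Lemma Fobj_fp n g x : 0 < x < 1 -> Fobj (INR n) g x = fp n g x.
Proof.
  intros Hx. unfold Fobj, fp, log2. rewrite !Rpower_pow by lra. ring.
Qed.

Lemma phi_ge1 n x : 0 < x < 1 -> 1 <= (1+x)^n + (1-x)^n.
Proof.
  intros Hx. pose proof (pow_R1_Rle (1+x) n ltac:(lra)).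
  pose proof (pow_le (1-x) n ltac:(lra)). lra.
Qed.

Lemma ref_point n g : (2 <= n)%nat -> 0 < g < 1/2 ->
  fp n g (1 - (1/2 - g)/2) < INR n - 1.
Proof.
  intros Hn Hg. set (e := (1/2 - g)/2).
  assert (He: 0 < e < 1/4) by (unfold e; lra).
  assert (Hg': g = 1/2 - 2*e) by (unfold e; lra).
  assert (HnR: 2 <= INR n) by (replace 2 with (INR 2) by (simpl; ring); apply le_INR; auto).
  unfold fp. replace (1 + (1 - e)) with (2 - e) by ring.
  replace (1 - (1 - e)) with e by ring.
  assert (Hen: e ^ n <= e ^ 2).
  { replace n with (2 + (n-2))%nat by lia. rewrite pow_add.
    assert (e ^ (n-2) <= 1). { rewrite <- (pow1 (n-2)). apply pow_incr; lra. }
    assert (0 < e^2) by (apply pow_lt; lra). nra. }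
  assert (H2e: 1 <= (2-e)^n) by (apply pow_R1_Rle; lra).
  assert (Hle: (2-e)^n + e^n <= (2-e)^n * (1 + e^2)) by (simpl in *; nra).
  assert (Hpos: 0 < (2-e)^n + e^n) by (pose proof (pow_lt e n ltac:(lra)); lra).
  pose proof (ln_le' _ _ Hpos Hle) as L1.
  rewrite ln_mult in L1 by (try apply pow_lt; simpl; nra).
  rewrite ln_pow in L1 by lra.
  assert (L2: ln (2 - e) <= ln 2 - e/2).
  { replace (2 - e) with (2 * (1 - e/2)) by field. rewrite ln_mult by lra.
    pose proof (ln_le_sub1 (1 - e/2) ltac:(lra)). lra. }
  assert (L3: ln (1 + e^2) <= e^2) by (pose proof (ln_le_sub1 (1+e^2) ltac:(simpl; nra)); lra).
  assert (L4: - ln (1 - e) <= 1/(1-e) - 1).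
  { rewrite <- ln_Rinv by lra. pose proof (ln_le_sub1 (/ (1-e)) ltac:(apply Rinv_0_lt_compat; lra)).
    unfold Rdiv. lra. }
  assert (Alg: INR n * (ln 2 - e/2) + e^2 + INR n * g * (1/(1-e) - 1) < INR n * ln 2).
  { assert (K: 1/(1-e) - 1 = e / (1-e)) by (field; lra).
    rewrite K.
    assert (K2: (- INR n * e/2 + e^2) * (1 - e) + INR n * g * e < 0).
    { rewrite Hg'. simpl. assert (0 < e*e) by nra. nra. }
    assert (K3: INR n * g * (e / (1-e)) = INR n * g * e / (1-e)) by (field; lra).
    rewrite K3.
    assert (K4: (- INR n * e/2 + e^2) + INR n * g * e / (1-e) < 0).
    { apply Rmult_lt_reg_r with (1-e); [lra|].
      replace ((- INR n * e/2 + e^2 + INR n * g * e / (1-e)) * (1-e)) with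
        ((- INR n * e/2 + e^2) * (1 - e) + INR n * g * e) by (field; lra). lra. }
    lra. }
  pose proof ln2_pos.
  assert (HL: ln ((2 - e) ^ n + e ^ n) - INR n * g * ln (1 - e) < INR n * ln 2).
  { assert (INR n * g * (- ln (1 - e)) <= INR n * g * (1/(1-e) - 1)).
    { apply Rmult_le_compat_l; [|lra]. apply Rmult_le_pos; lra. }
    assert (INR n * ln (2 - e) <= INR n * (ln 2 - e/2)) by (apply Rmult_le_compat_l; lra).
    lra. }
  apply Rmult_lt_reg_r with (ln 2); [lra|].
  replace ((ln ((2 - e) ^ n + e ^ n) / ln 2 - INR n * g * (ln (1 - e) / ln 2) - 1) * ln 2)
    with (ln ((2 - e) ^ n + e ^ n) - INR n * g * ln (1 - e) - ln 2) by (field; lra).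
  replace ((INR n - 1) * ln 2) with (INR n * ln 2 - ln 2) by ring. lra.
Qed.


Lemma exists_min n g : (2 <= n)%nat -> 0 < g < 1/2 ->
  exists t, 0 < t < 1 /\ forall x, 0 < x < 1 -> fp n g t <= fp n g x.
Proof.
  intros Hn Hg.
  set (x0 := 1 - (1/2 - g)/2).
  assert (Hx0: 0 < x0 < 1) by (unfold x0; lra).
  set (f0 := fp n g x0).
  assert (Hf0: f0 < INR n - 1) by apply (ref_point n g Hn Hg).
  assert (HnR: 2 <= INR n) by (replace 2 with (INR 2) by (simpl; ring); apply le_INR; auto).
  pose proof ln2_pos as Hl2.
  set (K := - (f0 + 1) * ln 2 / (INR n * g)).
  set (a := Rmin x0 (exp K)).
  assert (Ha: 0 < a) by (apply Rmin_pos; [lra| apply exp_pos]).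
  assert (Hax: a <= x0) by apply Rmin_l.
  set (c := (f0 + 1) / INR n).
  assert (Hc: c < 1) by (unfold c; apply Rmult_lt_reg_r with (INR n); [lra|]; unfold Rdiv; rewrite Rmult_assoc, Rinv_l; lra).
  set (b := Rmax x0 (exp (c * ln 2) - 1)).
  assert (Hxb: x0 <= b) by apply Rmax_l.
  assert (Hb: b < 1).
  { apply Rmax_lub_lt; [lra|]. assert (exp (c * ln 2) < exp (ln 2)) by (apply exp_increasing; nra).
    rewrite exp_ln in H by lra. lra. }
  assert (low: forall x, 0 < x <= a -> f0 <= fp n g x).
  { intros x Hx. unfold fp.
    assert (0 <= ln ((1 + x) ^ n + (1 - x) ^ n)).
    { rewrite <- ln_1. apply ln_le'; [lra|]. apply phi_ge1. split; lra. }
    assert (ln x <= K).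
    { rewrite <- (ln_exp K). apply ln_le'; [lra|]. apply Rle_trans with a; [lra| apply Rmin_r]. }
    assert (E: - INR n * g * K = (f0 + 1) * ln 2) by (unfold K; field; split; lra).
    assert (- INR n * g * ln x >= (f0 + 1) * ln 2).
    { rewrite <- E. apply Rle_ge. 
      replace (- INR n * g * K) with (INR n * g * (- K)) by ring.
      replace (- INR n * g * ln x) with (INR n * g * (- ln x)) by ring.
      apply Rmult_le_compat_l; [apply Rmult_le_pos; lra| lra]. }
    apply Rmult_le_reg_r with (ln 2); [lra|].
    replace ((ln ((1 + x) ^ n + (1 - x) ^ n) / ln 2 - INR n * g * (ln x / ln 2) - 1) * ln 2)
      with (ln ((1 + x) ^ n + (1 - x) ^ n) - INR n * g * ln x - ln 2) by (field; lra).
    nra. }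
  assert (high: forall x, b <= x < 1 -> f0 <= fp n g x).
  { intros x Hx.
    assert (Hx': 0 < x < 1) by lra. unfold fp.
    assert (ln ((1+x)^n) <= ln ((1 + x) ^ n + (1 - x) ^ n)).
    { apply ln_le'. apply pow_lt; lra. pose proof (pow_le (1-x) n ltac:(lra)). lra. }
    rewrite ln_pow in H by lra.
    assert (c * ln 2 <= ln (1 + x)).
    { rewrite <- (ln_exp (c * ln 2)). apply ln_le'; [apply exp_pos|].
      assert (exp (c * ln 2) - 1 <= b) by apply Rmax_r. lra. }
    assert (ln x <= 0) by (rewrite <- ln_1; apply ln_le'; lra).
    assert (E: INR n * c = f0 + 1) by (unfold c; field; lra).
    apply Rmult_le_reg_r with (ln 2); [lra|].
    replace ((ln ((1 + x) ^ n + (1 - x) ^ n) / ln 2 - INR n * g * (ln x / ln 2) - 1) * ln 2)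
      with (ln ((1 + x) ^ n + (1 - x) ^ n) - INR n * g * ln x - ln 2) by (field; lra).
    assert (INR n * (c * ln 2) <= INR n * ln (1 + x)) by (apply Rmult_le_compat_l; lra).
    assert (0 <= - (INR n * g * ln x)).
    { replace (- (INR n * g * ln x)) with ((INR n * g) * (- ln x)) by ring.
      apply Rmult_le_pos; [apply Rmult_le_pos|]; lra. }
    replace (INR n * (c * ln 2)) with ((f0+1) * ln 2) in H2 by (rewrite <- E; ring).
    nra. }
  assert (Hab: a <= b) by lra.
  destruct (continuity_ab_min (fp n g) a b Hab) as [mx [Hmx Hmxab]].
  { intros y Hy. unfold fp. reg.
    - apply ln_cont. lra.
    - apply ln_cont. pose proof (phi_ge1 n y ltac:(lra)). lra. }
  exists mx. split; [lra|].
  intros x Hx.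
  assert (fp n g mx <= f0) by (apply Hmx; lra).
  destruct (Rle_dec x a) as [H1|H1]. { pose proof (low x ltac:(lra)). lra. }
  destruct (Rle_dec b x) as [H2|H2]. { pose proof (high x ltac:(lra)). lra. }
  apply Hmx. lra.
Qed.


Lemma F2_spec n g : (2 <= n)%nat -> 0 < g < 1/2 ->
  (exists x, 0 < x < 1 /\ Fobj (INR n) g x = F2 (INR n) g) /\
  (forall x, 0 < x < 1 -> F2 (INR n) g <= Fobj (INR n) g x).
Proof.
  intros Hn Hg. unfold F2.
  apply (epsilon_spec (inhabits 0) (fun v => (exists x, 0 < x < 1 /\ Fobj (INR n) g x = v) /\
              (forall x, 0 < x < 1 -> v <= Fobj (INR n) g x))).
  destruct (exists_min n g Hn Hg) as [t [Ht Hmin]].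
  exists (Fobj (INR n) g t). split.
  - exists t; auto.
  - intros x Hx. rewrite !Fobj_fp by auto. auto.
Qed.

Lemma hbin_ln g : 0 < g < 1 -> hbin g * ln 2 = - (g * ln g) - (1-g) * ln (1-g).
Proof.
  intros Hg. unfold hbin, plogp, log2.
  destruct (Rle_dec g 0); [lra|]. destruct (Rle_dec (1-g) 0); [lra|].
  pose proof ln2_pos. field. lra.
Qed.

Lemma key_h g u : 0 < g < 1 -> 0 < u ->
  - (g * ln g) - (1-g) * ln (1-g) <= ln (1+u) - g * ln u.
Proof.
  intros Hg Hu.
  pose proof (exp_convex (1-g) g (- ln (1-g)) (ln u - ln g) ltac:(lra) ltac:(lra) ltac:(lra)) as H.
  rewrite exp_Ropp, exp_ln in H by lra.
  replace (exp (ln u - ln g)) with (u / g) in H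
    by (unfold Rminus; rewrite exp_plus, exp_Ropp, !exp_ln by lra; reflexivity).
  replace ((1 - g) * / (1 - g) + g * (u / g)) with (1 + u) in H by (field; lra).
  apply ln_le' in H; [|apply exp_pos]. rewrite ln_exp in H. lra.
Qed.

Lemma Rpow2 y : 0 < y -> Rpower y 2 = y ^ 2.
Proof. intros Hy. replace 2 with (INR 2) at 1 by (simpl; ring). apply Rpower_pow; auto. Qed.

Lemma Fobj2_ln g x : 0 < x < 1 -> Fobj 2 g x * ln 2 = ln (1 + x^2) - g * ln (x^2).
Proof.
  intros Hx. unfold Fobj, log2. rewrite !Rpow2 by lra.
  replace ((1 + x) ^ 2 + (1 - x) ^ 2) with (2 * (1 + x^2)) by ring.
  rewrite ln_mult by (simpl; nra). rewrite ln_pow by lra.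
  pose proof ln2_pos. simpl INR. field. lra.
Qed.

Lemma F2_two g : 0 < g < 1/2 -> F2 2 g = hbin g.
Proof.
  intros Hg. pose proof ln2_pos.
  set (y := g / (1-g)).
  assert (Hy: 0 < y < 1) by (unfold y; split; [apply Rdiv_lt_0_compat; lra|];
    apply Rmult_lt_reg_r with (1-g); [lra|]; unfold Rdiv; rewrite Rmult_assoc, Rinv_l; lra).
  set (x0 := sqrt y).
  assert (Hx0: 0 < x0 < 1).
  { unfold x0. split. apply sqrt_lt_R0; lra. rewrite <- sqrt_1. apply sqrt_lt_1; lra. }
  assert (Hx02: x0 ^ 2 = y) by (unfold x0; apply pow2_sqrt; lra).
  assert (Hlow: forall x, 0 < x < 1 -> hbin g <= Fobj 2 g x).
  { intros x Hx. apply Rmult_le_reg_r with (ln 2); [lra|].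
    rewrite hbin_ln, Fobj2_ln by lra. apply key_h; [lra|]. simpl; nra. }
  assert (Heq: Fobj 2 g x0 = hbin g).
  { apply Rmult_eq_reg_r with (ln 2); [|lra].
    rewrite hbin_ln, Fobj2_ln by lra. rewrite Hx02.
    replace (1 + y) with (/ (1-g)) by (unfold y; field; lra).
    unfold y. unfold Rdiv. rewrite ln_mult, !ln_Rinv by (try apply Rinv_0_lt_compat; lra). ring. }
  assert (Hs := epsilon_spec (inhabits 0) (fun v => (exists x, 0 < x < 1 /\ Fobj 2 g x = v) /\
              (forall x, 0 < x < 1 -> v <= Fobj 2 g x))).
  destruct Hs as [[x1 [Hx1 E1]] H2].
  { exists (hbin g). split. exists x0; auto. intros; apply Hlow; auto. }
  unfold F2. apply Rle_antisym.
  - rewrite <- Heq. apply H2; auto.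
  - rewrite <- E1. apply Hlow; auto.
Qed.

Lemma feas1 g d Q : feasible 1 g d Q -> Q 1%nat = g /\ Q 0%nat = 1 - g /\ d = g.
Proof.
  intros [[Hpos Hsum] [Hmarg Hpar]].
  specialize (Hmarg 0%nat ltac:(lia)). simpl in *. lra.
Qed.

Lemma F3_1 g d a : 0 < g < 1 -> F3 1 g d = Some a -> a = 0.
Proof.
  intros Hg E.
  set (P := fun o => match o with
              | None => ~ (exists Q, feasible 1 g d Q)
              | Some v => exists H, is_max_entropy 1 g d H /\ v = H - hbin d
              end).
  assert (HP: P (F3 1 g d)).
  { unfold F3. apply (epsilon_spec (inhabits None) P).
    destruct (classic (exists Q, feasible 1 g d Q)) as [[Q HQ]|HN].
    - exists (Some (entropy 1 Q - hbin d)). exists (entropy 1 Q). split; [|reflexivity].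
      split. exists Q; auto.
      intros Q' HQ'. apply feas1 in HQ. apply feas1 in HQ'. unfold entropy. simpl.
      destruct HQ as [A1 [A2 _]]. destruct HQ' as [B1 [B2 _]].
      rewrite A1, A2, B1, B2. lra.
    - exists None. exact HN. }
  rewrite E in HP. destruct HP as [H [[[Q [HQ HE]] _] Ha]].
  apply feas1 in HQ. destruct HQ as [A1 [A2 A3]].
  rewrite Ha, <- HE, A3. unfold entropy. simpl. rewrite A1, A2. unfold hbin. ring.
Qed.


Theorem mainTheorem18 (m : nat) (g d : R) :
  (2 <= m)%nat -> 0 < g < 1 / 2 -> 0 <= d <= 1 ->
  match F3 1 g d with
  | None => True
  | Some a => a + F2 (INR (m + 1)) g < F2 2 g + F2 (INR m) g
  end.
Proof.
  intros Hm Hg Hd.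
  destruct (F3 1 g d) as [a|] eqn:E; [|exact I].
  apply F3_1 in E; [|lra]. rewrite E.
  rewrite F2_two by auto.
  destruct (F2_spec m g Hm Hg) as [[x1 [Hx1 Ex1]] _].
  destruct (F2_spec (m+1) g ltac:(lia) Hg) as [_ Hle].
  rewrite <- Ex1.
  pose proof ln2_pos.
  set (y := g / (1-g)).
  assert (Hy: 0 < y < 1) by (unfold y; split; [apply Rdiv_lt_0_compat; lra|];
    apply Rmult_lt_reg_r with (1-g); [lra|]; unfold Rdiv; rewrite Rmult_assoc, Rinv_l; lra).
  assert (HnR: 2 <= INR m) by (replace 2 with (INR 2) by (simpl; ring); apply le_INR; auto).
  set (w := (INR m * ln x1 + ln y) / (INR m + 1)).
  set (z := exp w).
  assert (Hw: w < 0).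
  { unfold w. assert (ln x1 < 0) by (rewrite <- ln_1; apply ln_increasing; lra).
    assert (ln y < 0) by (rewrite <- ln_1; apply ln_increasing; lra).
    apply Rmult_lt_reg_r with (INR m + 1); [lra|]. unfold Rdiv.
    rewrite Rmult_assoc, Rinv_l by lra. nra. }
  assert (Hz: 0 < z < 1).
  { unfold z. split. apply exp_pos. rewrite <- exp_0. apply exp_increasing; auto. }
  assert (Hlt: Fobj (INR (m+1)) g z < Fobj (INR m) g x1 + hbin g).
  { rewrite !Fobj_fp by auto. unfold fp.
    rewrite Nat.add_1_r, S_INR.
    pose proof (binom_ineq m x1 y ltac:(lra) ltac:(lra)) as HB. simpl in HB. fold w z in HB.
    change ((1 + z) * (1 + z) ^ m + (1 - z) * (1 - z) ^ m) with ((1+z)^(S m) + (1-z)^(S m)) in HB.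
    assert (Hpm: 0 < (1 - x1) ^ m) by (apply pow_lt; lra).
    assert (Hpp: 0 < (1 + x1) ^ m) by (apply pow_lt; lra).
    assert (HB2: (1+z)^(S m) + (1-z)^(S m) < ((1 + x1) ^ m + (1 - x1) ^ m) * (1 + y)) by nra.
    assert (Hp0: 0 < (1+z)^(S m) + (1-z)^(S m)).
    { pose proof (pow_lt (1+z) (S m) ltac:(lra)). pose proof (pow_le (1-z) (S m) ltac:(lra)). lra. }
    apply ln_increasing in HB2; auto.
    rewrite ln_mult in HB2 by lra.
    assert (Hlz: ln z = w) by (unfold z; apply ln_exp).
    rewrite Hlz.
    assert (Hh: hbin g * ln 2 = ln (1 + y) - g * ln y).
    { rewrite hbin_ln by lra.
      replace (1 + y) with (/ (1-g)) by (unfold y; field; lra).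
      unfold y. unfold Rdiv. rewrite ln_mult, !ln_Rinv by (try apply Rinv_0_lt_compat; lra). ring. }
    assert (Hwm: (INR m + 1) * w = INR m * ln x1 + ln y) by (unfold w; field; lra).
    apply Rmult_lt_reg_r with (ln 2); [lra|].
    rewrite (Rmult_plus_distr_r _ (hbin g)), Hh.
    replace ((ln ((1 + z) ^ S m + (1 - z) ^ S m) / ln 2 - (INR m + 1) * g * (w / ln 2) - 1) * ln 2)
      with (ln ((1 + z) ^ S m + (1 - z) ^ S m) - g * ((INR m + 1) * w) - ln 2) by (field; lra).
    replace ((ln ((1 + x1) ^ m + (1 - x1) ^ m) / ln 2 - INR m * g * (ln x1 / ln 2) - 1) * ln 2)
      with (ln ((1 + x1) ^ m + (1 - x1) ^ m) - INR m * g * ln x1 - ln 2) by (field; lra).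
    rewrite Hwm. nra. }
  pose proof (Hle z Hz). lra.
Qed.
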